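(* Let $G$ be a finite group and let $\pi(G)$ denote the set of prime divisors of $|G|$. Then $G$ is supersoluble if and only if for every prime $p\in\pi(G)$ there exists a supersoluble subgroup $H\le G$ with $|G:H|=p$.
   Context: All groups are finite. A group is supersoluble if it has a normal series with all factors cyclic of prime order (equivalently, a chief series with all chief factors of prime order). *)

(* Defs.v *)
From mathcomp Require Import all_boot all_fingroup all_solvable.
Set Implicit Arguments. Unset Strict Implicit. Unset Printing Implicit Defensive.
Local Open Scope group_scope.

Definition ss_step (gT : finGroupType) (G : {set gT}) (H K : {group gT}) : bool :=
  [&& H <| G, K <| G, H \subset K & prime #|K : H|].

Definition supersoluble (gT : finGroupType) (G : {set gT}) : Prop :=
  exists s : seq {group gT},
    path (ss_step G) 1%G s /\ (last 1%G s : {set gT}) = G.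

(* Main.v *)
Require Import Defs.
From mathcomp Require Import all_boot all_fingroup all_solvable.
From mathcomp Require Import zify.
Set Implicit Arguments. Unset Strict Implicit. Unset Printing Implicit Defensive.
Local Open Scope group_scope.

Section Aux.
Variable gT : finGroupType.
Implicit Types (A B x y G H K N : {group gT}).

Lemma idx_dvd A x y : x \subset y -> y \subset 'N(x) ->
  (#|A :&: y : A :&: x| %| #|y : x|)%N.
Proof.
move=> sxy nxy.
set B := (A :&: y)%G.
have sBy : B \subset y by rewrite subsetIr.
have nBx : B \subset 'N(x) by apply: subset_trans nxy.
have eBx : B :&: x = A :&: x.
  by rewrite /B -setIA (setIidPr sxy).
have hm := mul_cardG B x.
rewrite -(norm_joinEl nBx) in hm.
have dj : (#|B <*> x| %| #|y|)%N by apply: cardSg; rewrite join_subG sBy sxy.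
have ly := Lagrange sxy.
have lB : (#|A :&: x| * #|B : A :&: x| = #|B|)%N.
  by rewrite -eBx; apply: Lagrange; apply: subsetIl.
rewrite eBx in hm.
have e : #|B <*> x| = (#|B : A :&: x| * #|x|)%N.
  apply/eqP; rewrite -(@eqn_pmul2r #|A :&: x|) ?cardG_gt0 // -hm -lB.
  apply/eqP; nia.
rewrite e -ly mulnC dvdn_pmul2l ?cardG_gt0 // in dj.
Qed.

Definition wstep (G : {set gT}) (H K : {group gT}) : bool :=
  [&& H <| G, K <| G, H \subset K & (#|K : H| == 1%N) || prime #|K : H|].

Lemma compress (G : {set gT}) x s : path (wstep G) x s ->
  exists s', path (ss_step G) x s' /\ (last x s' : {set gT}) = last x s.
Proof.
elim: s x => [|y s IH] x /=; first by move=> _; exists [::].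
case/andP=> /and4P[nx ny sxy hi] /IH [s' [p' l']].
case/orP: hi => hi.
  have exy : x = y.
    by apply: val_inj; apply/eqP; rewrite eqEsubset sxy -indexg_eq1.
  by subst y; exists s'.
by exists (y :: s'); split => //=; rewrite /ss_step nx ny sxy hi p'.
Qed.


Lemma wstep_ss (G : {set gT}) s : path (wstep G) 1%G s -> (last 1%G s : {set gT}) = G ->
  supersoluble G.
Proof. by case/compress=> s' [p' l'] l; exists s'; rewrite l'. Qed.

Lemma dvd_prime1 d p : prime p -> (d %| p)%N -> (d == 1%N) || prime d.
Proof.
move=> pp; case/primeP: (pp) => _ hd /hd /orP[->//|/eqP->].
by rewrite pp orbT.
Qed.

Lemma ss_sub (G H : {group gT}) : supersoluble G -> H \subset G -> supersoluble H.
Proof.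
move=> [s [ps ls]] sHG.
have gen : forall (x : {group gT}) s, path (ss_step G) x s ->
   path (wstep H) (H :&: x)%G (map (fun X => (H :&: X)%G) s).
  move=> x0 s0; elim: s0 x0 => [|y s0 IH] x0 //=.
  case/andP=> /and4P[nx ny sxy hi] /IH ->; rewrite andbT.
  rewrite /wstep (normalGI sHG nx) (normalGI sHG ny) setIS //=.
  apply: (dvd_prime1 hi); apply: idx_dvd => //.
  exact: subset_trans (normal_sub ny) (normal_norm nx).
have := gen _ _ ps.
have -> : (H :&: 1)%G = 1%G by apply: val_inj; rewrite /= setIg1.
move=> pw; apply: wstep_ss pw _.
have := last_map (fun X => (H :&: X)%G) s 1%G.
have -> : (H :&: 1)%G = 1%G by apply: val_inj; rewrite /= setIg1.
by move=> ->; rewrite /= ls; apply/setIidPl.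
Qed.


Lemma ss_minnormal (G W : {group gT}) : supersoluble G -> W <| G -> W :!=: 1 ->
  exists N : {group gT}, [/\ N <| G, N \subset W & prime #|N|].
Proof.
move=> [s [ps ls]] nW ntW.
have gen : forall (x : {group gT}) s, path (ss_step G) x s ->
    (last x s : {set gT}) = G -> W :&: x = 1 ->
  exists N : {group gT}, [/\ N <| G, N \subset W & prime #|N|].
  move=> x0 s0; elim: s0 x0 => [|y s0 IH] x0 /=.
    move=> _ -> eW; case/negP: ntW; apply/eqP.
    by rewrite -eW; apply/esym/setIidPl; apply: normal_sub.
  case/andP=> /and4P[nx ny sxy hi] ps0 ls0 ex.
  have [ey|ney] := eqVneq (W :&: y) 1; first exact: IH ey.
  exists (W :&: y)%G; split => /=; first exact: normalI.
    exact: subsetIl.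
  have := dvd_prime1 hi (idx_dvd W sxy (subset_trans (normal_sub ny) (normal_norm nx))).
  rewrite ex indexg1 /= => /orP[|//].
  by rewrite -trivg_card1 (negPf ney).
apply: gen ps ls _; exact: setIg1.
Qed.

End Aux.

Lemma ss_quo (gT : finGroupType) (G N : {group gT}) :
  supersoluble G -> N <| G -> supersoluble (G / N).
Proof.
move=> [s [ps ls]] nNG.
have nG : G \subset 'N(N) by apply: normal_norm.
have gen : forall (x : {group gT}) s, path (ss_step G) x s ->
   path (wstep (G / N)) (x / N)%G (map (fun X => (X / N)%G) s).
  move=> x0 s0; elim: s0 x0 => [|y s0 IH] x0 //=.
  case/andP=> /and4P[nx ny sxy hi] /IH ->; rewrite andbT.
  rewrite /wstep !quotient_normal // quotientS //=.
  apply: (dvd_prime1 hi); apply: index_quotient.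
  by apply: subset_trans nG; apply: subset_trans (normal_sub ny); apply: subsetIl.
have e1 : (1 / N)%G = 1%G by apply: val_inj; rewrite /= quotient1.
have := gen _ _ ps; rewrite e1 => pw; apply: wstep_ss pw _.
have := last_map (fun X => (X / N)%G) s 1%G.
by rewrite e1 => ->; rewrite /= ls.
Qed.

Lemma ss_lift (gT : finGroupType) (G N : {group gT}) :
  N <| G -> prime #|N| -> supersoluble (G / N) -> supersoluble G.
Proof.
move=> nNG pN [s [ps ls]].
pose f := fun X : {group coset_of N} => (coset N @*^-1 X)%G.
have gen : forall x s, path (ss_step (G / N)) x s -> path (ss_step G) (f x) (map f s).
  move=> x0 s0; elim: s0 x0 => [|y s0 IH] x0 //=.
  case/andP=> /and4P[nx ny sxy hi] /IH ->; rewrite andbT.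
  rewrite /ss_step /f /= -{1 2}(quotientGK nNG) !cosetpre_normal nx ny.
  by rewrite morphpreS //= index_cosetpre.
have e1 : f 1%G = N by apply: val_inj; rewrite /= cosetpre1.
exists (N :: map f s); split.
  have := gen _ _ ps; rewrite e1 => pw.
  by rewrite /= pw andbT /ss_step normal1 nNG sub1G indexg1 pN.
have := last_map f s 1%G; rewrite e1 /= => ->.
by rewrite /f /= ls; exact: quotientGK.
Qed.

Lemma ss_sylow_max n (gT : finGroupType) (H P : {group gT}) p :
  (#|H| <= n)%N -> supersoluble H -> prime p ->
  (forall r, r \in \pi(H) -> r <= p)%N -> p.-Sylow(H) P -> P <| H.
Proof.
elim: n gT H P => [|n IH] gT H P.
  by rewrite leqNgt cardG_gt0.
move=> leH ssH pp maxp sylP.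
have sPH := pHall_sub sylP.
have [H1|ntH] := eqVneq (H : {set gT}) 1.
  by rewrite /normal sPH H1 sub1G.
have [N [nNH sNH prN]] := ss_minnormal ssH (normal_refl H) ntH.
have ntN : N :!=: 1 by rewrite trivg_card1; apply/eqP => e; rewrite e in prN.
have nHN : H \subset 'N(N) := normal_norm nNH.
have nPN : P \subset 'N(N) := subset_trans sPH nHN.
have sylQ : p.-Sylow(H / N) (P / N) := quotient_pHall nPN sylP.
have nQ : P / N <| H / N.
  apply: (IH _ _ _ _ (ss_quo ssH nNH) pp _ sylQ).
    by rewrite -ltnS; apply: leq_trans leH; apply: ltn_quotient.
  move=> r /(pi_of_dvd (dvdn_quotient _ _) (cardG_gt0 H)); exact: maxp.
set M := (coset N @*^-1 (P / N))%G.
have nMH : M <| H by rewrite -(quotientGK nNH) cosetpre_normal.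
have eM : M :=: N * P := quotientK nPN.
have sPM : P \subset M by rewrite eM mulG_subr.
have sMH : M \subset H := normal_sub nMH.
have sylPM : p.-Sylow(M) P := pHall_subl sPM sMH sylP.
have dk : (#|M : 'N_M(P)| %| #|M : P|)%N.
  by apply: indexgS; rewrite subsetI sPM normG.
have dMP : (#|M : P| %| #|N|)%N.
  have hm := mul_cardG N P; rewrite -eM -(Lagrange sPM) in hm.
  have -> : #|N| = (#|M : P| * #|N :&: P|)%N.
    by apply/eqP; rewrite -(@eqn_pmul2r #|P|) ?cardG_gt0 // hm -mulnA mulnC.
  exact: dvdn_mulr.
have km := card_Syl_mod M pp; rewrite (card_Syl sylPM) in km.
have rH : #|N| \in \pi(H).
  by rewrite mem_primes prN cardG_gt0 cardSg // normal_sub.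
have := dvd_prime1 prN (dvdn_trans dk dMP).
rewrite indexg_eq1 => /orP[sMN | ].
  have nPM : P <| M.
    by rewrite /normal sPM (subset_trans sMN) // subsetIr.
  rewrite -(normal_Hall_pcore sylPM nPM).
  exact: char_normal_trans (pcore_char _ _) nMH.
move=> pk; exfalso.
have dk2 := dvdn_trans dk dMP.
have : #|M : 'N_M(P)| = #|N|.
  case/primeP: prN => _ /(_ _ dk2) /orP[/eqP e|/eqP //].
  by rewrite e in pk.
move=> ek; rewrite ek in km.
have lr := maxp _ rH.
move: km; rewrite leq_eqVlt in lr; case/orP: lr => [/eqP ->|lt].
  by rewrite modnn.
by rewrite modn_small // => e; rewrite e in prN.
Qed.

Lemma ss_sol (gT : finGroupType) (G : {group gT}) : supersoluble G -> solvable G.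
Proof.
move=> [s [ps ls]].
have gen : forall (x : {group gT}) s, path (ss_step G) x s -> solvable x ->
    solvable (last x s).
  move=> x0 s0; elim: s0 x0 => [|y s0 IH] x0 //=.
  case/andP=> /and4P[nx ny sxy hi] /IH hIH solx; apply: hIH.
  have nxy : x0 <| y := normalS sxy (normal_sub ny) nx.
  rewrite (series_sol nxy) solx /=.
  apply/abelian_sol/cyclic_abelian/prime_cyclic.
  by rewrite card_quotient // normal_norm.
by rewrite -ls; apply: gen ps (solvable1 _).
Qed.

Lemma chain_logn (gT : finGroupType) (G : {group gT}) p k (x : {group gT}) s :
  prime p -> x <| G -> path (ss_step G) x s ->
  (logn p #|x| <= k <= logn p #|last x s|)%N ->
  exists M : {group gT}, M <| G /\ logn p #|M| = k.
Proof.
move=> pp; elim: s x => [|y s IH] x /= nx.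
  by move=> _ le; exists x; split => //; apply/eqP; rewrite eqn_leq.
case/andP=> /and4P[_ ny sxy hi] ps /andP[l1 l2].
have [e|ne] := eqVneq (logn p #|x|) k; first by exists x.
apply: IH ny ps _; rewrite l2 andbT.
have : logn p #|y| = (logn p #|x| + logn p #|y : x|)%N.
  by rewrite -lognM ?cardG_gt0 ?indexg_gt0 // Lagrange.
rewrite (logn_prime _ hi) => ->.
have lt : (logn p #|x| < k)%N by rewrite ltn_neqAle ne l1.
by apply: leq_trans (leq_add (leqnn _) (leq_b1 _)) _; rewrite addn1.
Qed.

Lemma forward (gT : finGroupType) (G : {group gT}) p :
  supersoluble G -> p \in \pi(G) ->
  exists H : {group gT}, [/\ H \subset G, supersoluble H & #|G : H| = p].
Proof.
move=> ssG piG.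
have := piG; rewrite mem_primes => /and3P[pp G0 pG].
have solG := ss_sol ssG.
have [L hallL] := Hall_exists p^' solG.
have [s [ps ls]] := ssG.
set e := logn p #|G|.
have e0 : (0 < e)%N by rewrite /e logn_gt0.
have [M [nMG lM]] : exists M : {group gT}, M <| G /\ logn p #|M| = e.-1.
  apply: (chain_logn (k := e.-1) pp (normal1 G) ps).
  by rewrite cards1 logn1 /= ls leq_pred.
have sMG := normal_sub nMG.
have sLG := pHall_sub hallL.
have nML : L \subset 'N(M) := subset_trans sLG (normal_norm nMG).
set H := (M <*> L)%G.
have eH : (H : {set gT}) = M * L by rewrite /= norm_joinEr.
have sHG : H \subset G by rewrite join_subG sMG sLG.
exists H; split => //; first exact: ss_sub ssG sHG.
have hML : p^'.-Hall(M) (M :&: L) by rewrite setIC; exact: (Hall_setI_normal nMG hallL).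
have c1 := mul_cardG M L; rewrite -eH (card_Hall hML) (card_Hall hallL) in c1.
have cM := partnC p (cardG_gt0 M).
have cG := partnC p (cardG_gt0 G).
rewrite !p_part lM -/e in cM cG.
have LG := Lagrange sHG.
have eHc : #|H| = (p ^ e.-1 * #|G|`_p^')%N.
  apply/eqP; rewrite -(@eqn_pmul2r (#|M|`_p^')) ?part_gt0 //.
  by rewrite -c1 -{1}cM mulnAC.
apply/eqP; rewrite -(@eqn_pmul2l #|H|) ?cardG_gt0 // LG -{1}cG eHc.
by rewrite -{1}(prednK e0) expnSr mulnAC.
Qed.

Definition hyp (gT : finGroupType) (G : {group gT}) :=
  forall p : nat, p \in \pi(G) ->
     exists H : {group gT}, [/\ H \subset G, supersoluble H & #|G : H| = p].

Lemma sylow_up (gT : finGroupType) (G K S : {group gT}) p r :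
  K \subset G -> prime r -> r != p -> #|G : K| = r -> p.-Sylow(K) S -> p.-Sylow(G) S.
Proof.
move=> sKG pr rp iK sylS.
rewrite pHallE (subset_trans (pHall_sub sylS) sKG) /= (card_Hall sylS).
rewrite -(Lagrange sKG) iK partnM ?cardG_gt0 ?prime_gt0 //.
by rewrite [(r`_p)%N]p_part logn_prime // [p == r]eq_sym (negPf rp) muln1.
Qed.

Lemma sylow_in (gT : finGroupType) (G K P : {group gT}) p r :
  p.-Sylow(G) P -> P <| G ->
  K \subset G -> prime r -> r != p -> #|G : K| = r -> P \subset K.
Proof.
move=> sylP nPG sKG pr rp iK.
have [S sylS] := Sylow_exists p K.
have sylSG := sylow_up sKG pr rp iK sylS.
have sSP : S \subset P.
  by rewrite (sub_normal_Hall sylP nPG (pHall_sub sylSG)) (pHall_pgroup sylS).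
have eSP : S :==: P.
  by rewrite eqEcard sSP (card_Hall sylSG) (card_Hall sylP) leqnn.
by rewrite -(eqP eSP) (pHall_sub sylS).
Qed.

Lemma hyp_quo (gT : finGroupType) (G N : {group gT}) : N <| G ->
  (forall r, r \in \pi(G / N) ->
     exists K : {group gT}, [/\ K \subset G, supersoluble K, #|G : K| = r & N \subset K]) ->
  hyp (G / N).
Proof.
move=> nNG h r /h [K [sKG ssK iK sNK]].
exists (K / N)%G; split; first exact: quotientS.
  by apply: ss_quo ssK (normalS sNK sKG nNG).
rewrite /= index_quotient_eq // ?normal_norm //.
by apply: subset_trans sNK; apply: subsetIr.
Qed.

Lemma reverse n (gT : finGroupType) (G : {group gT}) :
  (#|G| <= n)%N -> hyp G -> supersoluble G.
Proof.
elim: n gT G => [|n IH] gT G; first by rewrite leqNgt cardG_gt0.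
move=> leG hG.
have [G1|ntG] := eqVneq (G : {set gT}) 1.
  by exists [::]; split => //=; rewrite G1.
have G1 : (1 < #|G|)%N by rewrite cardG_gt1.
set p := max_pdiv #|G|.
have pp : prime p := max_pdiv_prime G1.
have piG : p \in \pi(G) by rewrite pi_max_pdiv.
have maxp : forall r, r \in \pi(G) -> (r <= p)%N by move=> r; apply: max_pdiv_max.
have [P sylP] := Sylow_exists p G.
have sPG := pHall_sub sylP.
have nPG : P <| G.
  have [pG|npG] := boolP (p.-group G).
    have eP : P :==: G.
      by rewrite eqEcard sPG (card_Hall sylP) (part_pnat_id pG) leqnn.
    by rewrite (eqP eP) normal_refl.
  move: npG; rewrite /pgroup /pnat cardG_gt0 /= -has_predC => /hasP [q qG qp].
  have qnp : q != p by move: qp; rewrite /= !inE.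
  have [Hq [sHG ssHq iHq]] := hG q qG.
  have pq : prime q by move: qG; rewrite mem_primes => /andP[].
  have [S sylS] := Sylow_exists p Hq.
  have sylSG := sylow_up sHG pq qnp iHq sylS.
  have nSH : S <| Hq.
    apply: (ss_sylow_max (leqnn _) ssHq pp _ sylS) => r rH; apply: maxp.
    exact: pi_of_dvd (cardSg sHG) (cardG_gt0 G) _ rH.
  have km := card_Syl_mod G pp; rewrite (card_Syl sylSG) in km.
  have dk : (#|G : 'N_G(S)| %| q)%N.
    by rewrite -iHq; apply: indexgS; rewrite subsetI sHG normal_norm.
  have : (#|G : 'N_G(S)| == 1%N).
    case/primeP: (pq) => _ /(_ _ dk) /orP[//|/eqP e]; exfalso.
    rewrite e in km; have := maxp q qG; rewrite leq_eqVlt (negPf qnp) /= => lt.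
    by move: km; rewrite modn_small // => e1; rewrite e1 in pq.
  rewrite indexg_eq1 => sGN.
  have nSG : S <| G.
    by rewrite /normal (pHall_sub sylSG) (subset_trans sGN) // subsetIr.
  have sPS : P \subset S.
    by rewrite (sub_normal_Hall sylSG nSG sPG) (pHall_pgroup sylP).
  have ePS : P :==: S.
    by rewrite eqEcard sPS (card_Hall sylSG) (card_Hall sylP) leqnn.
  by rewrite (eqP ePS).
have pgP : p.-group P := pHall_pgroup sylP.
have [H [sHG ssH iH]] := hG p piG.
have eG : #|G| = (#|H| * p)%N by rewrite -(Lagrange sHG) iH.
have cP : #|P| = (#|H|`_p * p)%N.
  by rewrite (card_Hall sylP) eG partnM ?cardG_gt0 ?prime_gt0 // (part_pnat_id (pnat_id pp)).
have mc := mul_cardG P H.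
have dPH : (#|P :&: H| %| #|H|`_p)%N.
  rewrite -(part_pnat_id (pgroupS (subsetIl P H) pgP)).
  exact: partn_dvd (cardG_gt0 H) (cardSg (subsetIr P H)).
have ePH : P * H = G.
  apply/eqP; rewrite eqEcard mul_subG //=.
  have e1 : (#|H|`_p * #|G| = #|P| * #|H|)%N by rewrite eG cP mulnA mulnAC.
  rewrite -(@leq_pmul2l #|H|`_p) ?part_gt0 // e1 mc mulnC leq_mul2r.
  by rewrite dvdn_leq ?orbT ?part_gt0.
have ePHc : #|P :&: H| = (#|H|`_p)%N.
  apply/eqP; rewrite -(@eqn_pmul2l (#|H| * p)%N) ?muln_gt0 ?cardG_gt0 ?prime_gt0 //.
  rewrite -eG -{1}ePH -mc cP; apply/eqP.
  by rewrite eG mulnC mulnA [RHS]mulnAC.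
have other : forall r, r \in \pi(G) -> r != p ->
    exists K : {group gT}, [/\ K \subset G, supersoluble K, #|G : K| = r & P \subset K].
  move=> r rG rp; have [K [sKG ssK iK]] := hG r rG.
  have pr : prime r by move: rG; rewrite mem_primes => /andP[].
  by exists K; split => //; apply: sylow_in sylP nPG sKG pr rp iK.
have [Pp|Pnp] := eqVneq #|P| p.
  have ntP : P :!=: 1 by rewrite -cardG_gt1 Pp prime_gt1.
  apply: (ss_lift nPG); first by rewrite Pp.
  apply: IH.
    by rewrite -ltnS; apply: leq_trans leG; apply: ltn_quotient.
  apply: (hyp_quo nPG) => r rGP.
  have rG : r \in \pi(G) := pi_of_dvd (dvdn_quotient _ _) (cardG_gt0 G) rGP.
  have rp : r != p.
    apply/eqP => e; move: rGP; rewrite e mem_primes => /and3P[_ _ dv].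
    have dv2 : (p %| #|G : P|)%N by rewrite -card_quotient ?normal_norm.
    by case/and3P: sylP => _ _; rewrite p'natE // dv2.
  exact: other.
have ntPH : P :&: H != 1.
  apply: contraNneq Pnp => e.
  by rewrite cP -ePHc e cards1 mul1n.
have iPH : #|P : P :&: H| = p.
  apply/eqP; rewrite -(@eqn_pmul2l #|P :&: H|) ?cardG_gt0 //.
  by rewrite (Lagrange (subsetIl P H)) ePHc cP.
have nPHP : P :&: H <| P.
  by apply: (p_maximal_normal pgP); apply: p_index_maximal; rewrite ?subsetIl ?iPH.
have mz := meet_center_nil (pgroup_nil pgP) nPHP ntPH.
have nZG : 'Z(P) <| G := char_normal_trans (center_char P) nPG.
have nWH : H :&: 'Z(P) <| H := normalGI sHG nZG.
have ntW : (H :&: 'Z(P))%G :!=: 1.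
  by apply: contraNneq mz => eW; apply/eqP/trivgP; rewrite /= -eW setSI // subsetIr.
have [N [nNH sNW prN]] := ss_minnormal ssH nWH ntW.
have sNZ : N \subset 'Z(P) := subset_trans sNW (subsetIr _ _).
have sNP : N \subset P := subset_trans sNZ (center_sub P).
have sNH : N \subset H := subset_trans sNW (subsetIl _ _).
have nNG : N <| G.
  rewrite /normal (subset_trans sNP sPG) /= -{1}ePH mul_subG ?normal_norm //.
  by rewrite /normal sNP cents_norm // centsC (subset_trans sNZ) // subsetIr.
have ntN : N :!=: 1 by rewrite -cardG_gt1 prime_gt1.
apply: (ss_lift nNG prN); apply: IH.
  by rewrite -ltnS; apply: leq_trans leG; apply: ltn_quotient; rewrite // normal_sub.
apply: (hyp_quo nNG) => r rGN.
have rG : r \in \pi(G) := pi_of_dvd (dvdn_quotient _ _) (cardG_gt0 G) rGN.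
have [rp|rp] := eqVneq r p.
  by exists H; split => //; rewrite rp.
have [K [sKG ssK iK sPK]] := other r rG rp.
by exists K; split => //; apply: subset_trans sPK.
Qed.

Theorem theorem1 (gT : finGroupType) (G : {group gT}) :
  supersoluble G <->
  (forall p : nat, p \in \pi(G) ->
     exists H : {group gT}, [/\ H \subset G, supersoluble H & #|G : H| = p]).
Proof.
split; first by move=> ssG p pG; exact: forward.
by move=> h; exact: (reverse (leqnn _) h).
Qed.
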